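(* Let $\rho\geqslant\sqrt7$, and set $c=\frac14(\rho+\rho^{-1})^2$, $d=\frac12(\rho^2-4-\rho^{-2})$. For an integer $n$ define $$A_n=\rho^{2n}-nc-2n-n^2d-(n|n|-|n|)d,\quad B_n=\rho^{-2n}-nc+2n+n^2d-(n|n|-|n|)d,\quad C_n=1-nc-(n|n|-|n|)d,$$ and the Hermitian form $Q_n(\xi,\zeta)=A_n|\xi|^2+B_n|\zeta|^2+2C_n\operatorname{Re}(\xi\bar\zeta)$ on $\mathbb C^2$. Then for every integer $n\neq0,1$ and all $\xi,\zeta\in\mathbb C$, $Q_n(\xi,\zeta)>0$ unless $\xi=\zeta=0$. *)

(* Defs.v *)
(* C is an arbitrary numClosedFieldType (e.g. algC),
   a model of the complex numbers with real order. *)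
From HB Require Import structures.
From mathcomp Require Import all_boot all_order all_algebra.
Set Implicit Arguments. Unset Strict Implicit. Unset Printing Implicit Defensive.
Import Order.TTheory GRing.Theory Num.Theory.
Local Open Scope ring_scope.

Section Defs.
Variable C : numClosedFieldType.

Definition cst (rho : C) : C := (rho + rho^-1) ^+ 2 / 4%:R.
Definition dst (rho : C) : C := (rho ^+ 2 - 4%:R - rho ^- 2) / 2%:R.

Definition ecorr (rho : C) (n : int) : C :=
  (n * `|n| - `|n|)%:~R * dst rho.

Definition An (rho : C) (n : int) : C :=
  rho ^ (2 * n) - n%:~R * cst rho - 2%:R * n%:~R - n%:~R ^+ 2 * dst rho
  - ecorr rho n.
Definition Bn (rho : C) (n : int) : C :=
  rho ^ (- (2 * n)) - n%:~R * cst rho + 2%:R * n%:~R + n%:~R ^+ 2 * dst rho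
  - ecorr rho n.
Definition Cn (rho : C) (n : int) : C :=
  1 - n%:~R * cst rho - ecorr rho n.

Definition Qn (rho : C) (n : int) (xi zeta : C) : C :=
  An rho n * `|xi| ^+ 2 + Bn rho n * `|zeta| ^+ 2
  + 2%:R * Cn rho n * 'Re (xi * zeta^*).
End Defs.

(* Main.v *)
Set Warnings "-notation-overridden,-ambiguous-paths".
Require Import Defs.
From HB Require Import structures.
From mathcomp Require Import all_boot all_order all_algebra.
From Stdlib Require Import Ring Field ZArith.
Import Order.TTheory GRing.Theory Num.Theory.
Local Open Scope ring_scope.

Section S.
Variable C : numClosedFieldType.

Lemma CRth : @ring_theory (GRing.PzSemiRing.sort C) (0:C) 1 (+%R : C -> C -> C) ( *%R : C -> C -> C) (fun x y : C => x - y) (-%R : C -> C) eq.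
Proof.
constructor.
- exact: add0r. - exact: addrC. - exact: addrA. - exact: mul1r.
- exact: mulrC. - exact: mulrA. - exact: mulrDl. - by []. - exact: subrr.
Qed.

Lemma CFth : @field_theory (GRing.PzSemiRing.sort C) (0:C) 1 (+%R : C -> C -> C) ( *%R : C -> C -> C) (fun x y : C => x - y) (-%R : C -> C) (fun x y => x / y) GRing.inv eq.
Proof.
constructor.
- exact: CRth.
- by apply/eqP; rewrite oner_eq0.
- by [].
- move=> x Hx; rewrite mulVf //; exact/eqP.
Qed.

Definition Zr : Z -> C := gen_phiZ (0:C) 1 (+%R : C -> C -> C) ( *%R : C -> C -> C) (-%R : C -> C).

Ltac Ccst t :=
  match t with
  | Zr ?z => match isZcst z with true => constr:(z) | _ => constr:(InitialRing.NotConstant) end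
  | _ => constr:(InitialRing.NotConstant)
  end.

Lemma Zr_morph : @ring_morph (GRing.PzSemiRing.sort C) (0:C) 1 (+%R : C -> C -> C) ( *%R : C -> C -> C) (fun x y : C => x - y) (-%R : C -> C) eq
  Z 0%Z 1%Z Z.add Z.mul Z.sub Z.opp Z.eqb Zr.
Proof. exact: (gen_phiZ_morph (Eqsth _) (Eq_ext _ _ _) CRth). Qed.

Add Field Cfield : CFth (morphism Zr_morph, constants [Ccst]).

Lemma mul1_eq (a b : C) : @eq (GRing.PzSemiRing.sort C) (1 * a) (1 * b) -> a = b.
Proof. by rewrite !mul1r. Qed.
Ltac normop op canon := repeat match goal with |- context [op ?I] =>
  lazymatch I with canon => fail | _ => change (op I) with (op canon) end end.
Ltac cnorm :=
  normop (@Algebra.add) (Num_ClosedField__to__Algebra_BaseAddMagma C);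
  normop (@Algebra.opp) (Num_ClosedField__to__Algebra_BaseZmodule C);
  normop (@Algebra.zero) (Num_ClosedField__to__Algebra_BaseAddUMagma C);
  normop (@GRing.mul) (Num_ClosedField__to__GRing_PzSemiRing C);
  normop (@GRing.one) (Num_ClosedField__to__GRing_PzSemiRing C);
  normop (@GRing.inv) (Num_ClosedField__to__GRing_UnitRing C).
Ltac cfix := apply: mul1_eq; cnorm.
Ltac cring := cfix; ring.
Ltac cfield := cfix; field.




Lemma gen_step p :
  (gen_phiPOS (1:C) (+%R : C -> C -> C) ( *%R : C -> C -> C) (xO p)
     = (1+1) * gen_phiPOS (1:C) (+%R : C -> C -> C) ( *%R : C -> C -> C) p) /\
  (gen_phiPOS (1:C) (+%R : C -> C -> C) ( *%R : C -> C -> C) (xI p)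
     = 1 + (1+1) * gen_phiPOS (1:C) (+%R : C -> C -> C) ( *%R : C -> C -> C) p).
Proof. by case: p => [p|p|] /=; rewrite ?mulr1. Qed.

Lemma ZrE p : Zr (Zpos p) = (Pos.to_nat p)%:R.
Proof.
rewrite /Zr /=.
elim: p => [p IH|p IH|] //.
- by rewrite (gen_step p).2 IH Pos2Nat.inj_xI multE mulrS natrM mulr2n.
- by rewrite (gen_step p).1 IH Pos2Nat.inj_xO multE natrM mulr2n.
Qed.

Lemma Zr_gt0 p : 0 < Zr (Zpos p).
Proof. by rewrite ZrE ltr0n; apply/ssrnat.ltP; apply: Pos2Nat.is_pos. Qed.
Lemma Zr_ge0 p : 0 <= Zr (Zpos p).
Proof. exact/ltW/Zr_gt0. Qed.
Lemma Zr_real p : Zr (Zpos p) \is Num.real.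
Proof. by rewrite ZrE realn. Qed.

Lemma gt0_addl (x y : C) : 0 < x -> 0 <= y -> 0 < x + y.
Proof. move=> hx hy; exact: ltr_wpDr. Qed.
Lemma gt0_addr (x y : C) : 0 <= x -> 0 < y -> 0 < x + y.
Proof. by move=> hx hy; rewrite addrC; apply: gt0_addl. Qed.

Ltac ge0t := repeat first [ apply: Zr_ge0 | apply: ler01 | apply: addr_ge0 | apply: mulr_ge0 | assumption ].
Ltac gt0t := first [ apply: Zr_gt0 | apply: ltr01 | assumption
  | apply: mulr_gt0; gt0t
  | apply: gt0_addl; [gt0t|ge0t]
  | apply: gt0_addr; [ge0t|gt0t] ].
Ltac neq0t := solve [ apply/eqP; apply: lt0r_neq0; gt0t
                    | repeat split; apply/eqP; apply: lt0r_neq0; gt0t ].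

Lemma lt_by_mul (K X Y P : C) : 0 < K -> K * (Y - X) = P -> 0 < P -> X < Y.
Proof. by move=> hK <-; rewrite pmulr_rgt0 // subr_gt0. Qed.
Lemma le_by_mul (K X Y P : C) : 0 < K -> K * (Y - X) = P -> 0 <= P -> X <= Y.
Proof. by move=> hK <-; rewrite pmulr_rge0 // subr_ge0. Qed.

Definition sv (r : C) := (r*r - Zr 2 * r - Zr 3) / (Zr 4 * r).
Definition dv (r : C) := (r*r - Zr 4 * r - 1) / (Zr 2 * r).
Definition pv (r : C) := (Zr 3 * r * r - Zr 6 * r - 1) / (Zr 4 * r).
Definition qv (r : C) := (Zr 10 * r + Zr 3 - r * r) / (Zr 4 * r).
Definition Gv (r M : C) := Zr 4 * M + Zr 4 * M * M * dv r + M * M * M * (dv r * dv r).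
Definition Hv (r M : C) := Zr 4 * M - Zr 4 * M * M * dv r + M * M * M * (dv r * dv r)
   + Zr 2 * pv r + Zr 2 * M * dv r.

Lemma indP a (ha : 0 <= a) k :
  sv (a + Zr 7) + Gv (a + Zr 7) (k%:R + Zr 2) < (a + Zr 7) ^+ k.+2 * sv (a + Zr 7).
Proof.
elim: k => [|k IH].
- rewrite mulr0n add0r expr2.
  apply: (@lt_by_mul (Zr 4 * (a + Zr 7) * (a + Zr 7)) _ _ (Zr 1504 + (Zr 2176 * a + (Zr 1064 * a * a + (Zr 238 * a * a * a + (Zr 25 * a * a * a * a + (a * a * a * a * a))))))).
  + gt0t.
  + rewrite /sv /Gv /dv. cfield. neq0t.
  + gt0t.
- have hb : 0 <= k%:R :> C by apply: ler0n.
  rewrite mulrSr. move: (k%:R) hb IH => b hb IH.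
  rewrite exprS -mulrA.
  have h2 : (a + Zr 7) * (sv (a + Zr 7) + Gv (a + Zr 7) (b + Zr 2))
     < (a + Zr 7) * ((a + Zr 7) ^+ k.+2 * sv (a + Zr 7)).
    by rewrite ltr_pM2l //; gt0t.
  apply: le_lt_trans h2.
  apply: (@le_by_mul (Zr 4 * (a + Zr 7) * (a + Zr 7)) _ _ (Zr 42848 + (Zr 52144 * b + (Zr 19920 * b * b + (Zr 2400 * b * b * b + (Zr 37912 * a + (Zr 50048 * a * b + (Zr 21040 * a * b * b + (Zr 2800 * a * b * b * b + (Zr 13578 * a * a + (Zr 18972 * a * a * b + (Zr 8556 * a * a * b * b + (Zr 1240 * a * a * b * b * b + (Zr 2453 * a * a * a + (Zr 3556 * a * a * a * b + (Zr 1684 * a * a * a * b * b + (Zr 260 * a * a * a * b * b * b + (Zr 222 * a * a * a * a + (Zr 329 * a * a * a * a * b + (Zr 161 * a * a * a * a * b * b + (Zr 26 * a * a * a * a * b * b * b + (Zr 8 * a * a * a * a * a + (Zr 12 * a * a * a * a * a * b + (Zr 6 * a * a * a * a * a * b * b + (a * a * a * a * a * b * b * b))))))))))))))))))))))))).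
  + gt0t.
  + rewrite /sv /Gv /dv. cfield. neq0t.
  + ge0t.
Qed.

Lemma sqr_real_ge0 (x : C) : x \is Num.real -> 0 <= x * x.
Proof. by move=> hx; rewrite -expr2; apply: real_exprn_even_ge0. Qed.

Lemma indN a (ha : 0 <= a) k :
  Hv (a + Zr 7) (k%:R + 1) < (a + Zr 7) ^+ k.+1 * (pv (a + Zr 7) + Zr 2).
Proof.
elim: k => [|k IH].
- rewrite mulr0n add0r expr1.
  apply: (@lt_by_mul (Zr 4 * (a + Zr 7) * (a + Zr 7)) _ _ (Zr 5760 + (Zr 3420 * a + (Zr 721 * a * a + (Zr 64 * a * a * a + (Zr 2 * a * a * a * a)))))).
  + gt0t.
  + rewrite /Hv /pv /dv. cfield. neq0t.
  + gt0t.
- have hb : 0 <= k%:R :> C by apply: ler0n.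
  rewrite mulrSr. move: (k%:R) hb IH => b hb IH.
  rewrite exprS -mulrA.
  have h2 : (a + Zr 7) * Hv (a + Zr 7) (b + 1)
     < (a + Zr 7) * ((a + Zr 7) ^+ k.+1 * (pv (a + Zr 7) + Zr 2)).
    by rewrite ltr_pM2l //; gt0t.
  apply: le_lt_trans h2.
  apply: (@le_by_mul (Zr 4 * (a + Zr 7) * (a + Zr 7)) _ _ ((Zr 11696 + (Zr 264 * b + (Zr 80 * b * b + (Zr 1600 * b * b * b + (Zr 6712 * a + (Zr 208 * a * b + (Zr 1760 * a * b * b + (Zr 2800 * a * b * b * b + (Zr 1532 * a * a + (Zr 748 * a * a * b + (Zr 1764 * a * a * b * b + (Zr 1240 * a * a * b * b * b + (Zr 214 * a * a * a + (Zr 356 * a * a * a * b + (Zr 536 * a * a * a * b * b + (Zr 260 * a * a * a * b * b * b + (Zr 21 * a * a * a * a + (Zr 57 * a * a * a * a * b + (Zr 67 * a * a * a * a * b * b + (Zr 26 * a * a * a * a * b * b * b + (a * a * a * a * a + (Zr 3 * a * a * a * a * a * b + (Zr 3 * a * a * a * a * a * b * b + (a * a * a * a * a * b * b * b)))))))))))))))))))))))) + Zr 200 * b * ((Zr 2 * b - 1) * (Zr 2 * b - 1)))).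
  + gt0t.
  + rewrite /Hv /pv /dv. cfield. neq0t.
  + apply: addr_ge0; first by ge0t.
    apply: mulr_ge0; first by ge0t.
    apply: sqr_real_ge0; apply: realB; [apply: realM; [exact: Zr_real|exact: ger0_real] | exact: real1].
Qed.

Lemma gt0_eq (X Y : C) : Y = X -> 0 < Y -> 0 < X.
Proof. by move=> ->. Qed.

Lemma ecast (z : int) : ((z * `|z| - `|z|)%:~R : C) = z%:~R * (`|z|)%:~R - (`|z|)%:~R.
Proof. by rewrite intrD intrN intrM. Qed.

Lemma e2 : (2%:R : C) = Zr 2. Proof. by rewrite ZrE. Qed.
Lemma e4 : (4%:R : C) = Zr 4. Proof. by rewrite ZrE. Qed.

Lemma quad (A B K x y w : C) : 0 < B -> 0 < A * B - K * K -> 0 <= x -> 0 <= y ->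
  K \is Num.real -> w \is Num.real -> `|w| <= x * y -> (x != 0) \/ (y != 0) ->
  0 < A * x ^+ 2 + B * y ^+ 2 + 2%:R * K * w.
Proof.
move=> hB hD hx hy hK hw hwxy hxy.
have hk : 0 <= `|K| := normr_ge0 K.
have kK : `|K| * `|K| = K * K by rewrite -!expr2 real_normK.
have hKw : - (`|K| * (x * y)) <= K * w.
  apply: real_lerNnormlW; first by apply: realM.
  by rewrite normrM; apply: ler_wpM2l.
have hQ : A * x ^+ 2 + B * y ^+ 2 - 2%:R * (`|K| * (x * y)) <= A * x ^+ 2 + B * y ^+ 2 + 2%:R * K * w.
  rewrite -mulrA; apply: lerD => //.
  by rewrite -mulrN; apply: ler_wpM2l => //; apply: ler0n.
apply: lt_le_trans hQ.
have eB : B * (A * x ^+ 2 + B * y ^+ 2 - 2%:R * (`|K| * (x * y)))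
   = (B * y - `|K| * x) * (B * y - `|K| * x) + (A * B - K * K) * (x * x).
  rewrite -kK !expr2 e2. cring.
have hx2 : x = 0 \/ 0 < x.
  by case: (eqVneq x 0) => [->|/eqP hx0]; [left|right; rewrite lt_def; apply/andP; split => //; apply/eqP].
case: hx2 => [x0|xpos].
- rewrite x0 e2 !expr2.
  have -> : A * (0 * 0) + B * (y * y) - Zr 2 * (`|K| * (0 * y)) = B * (y * y) by cring.
  apply: mulr_gt0 => //; apply: mulr_gt0.
  1,2: case: hxy => [hx0|hy0]; [by rewrite x0 eqxx in hx0 | by rewrite lt_def hy0 hy].
- rewrite -(pmulr_rgt0 _ hB) eB.
  apply: ltr_wpDl.
  + apply: sqr_real_ge0; apply: realB; apply: realM.
    * exact: gtr0_real. * exact: ger0_real. * exact: ger0_real. * exact: ger0_real.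
  + by apply: mulr_gt0 => //; apply: mulr_gt0.
Qed.

Lemma sv_pos a : 0 <= a -> 0 < sv (a + Zr 7).
Proof.
move=> ha; apply: (@lt_by_mul (Zr 4 * (a + Zr 7)) _ _ (Zr 32 + (Zr 12 * a + a * a))).
+ gt0t. + rewrite /sv. cfield. neq0t. + gt0t.
Qed.
Lemma dv_pos a : 0 <= a -> 0 < dv (a + Zr 7).
Proof.
move=> ha; apply: (@lt_by_mul (Zr 2 * (a + Zr 7)) _ _ (Zr 20 + (Zr 10 * a + a * a))).
+ gt0t. + rewrite /dv. cfield. neq0t. + gt0t.
Qed.
Lemma pm2_pos a : 0 <= a -> 0 < pv (a + Zr 7) - Zr 2.
Proof.
move=> ha; apply: (@lt_by_mul (Zr 4 * (a + Zr 7)) _ _ (Zr 48 + (Zr 28 * a + Zr 3 * a * a))).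
+ gt0t. + rewrite /pv. cfield. neq0t. + gt0t.
Qed.
Lemma X_pos a b : 0 <= a -> 0 <= b ->
  0 <= qv (a + Zr 7) + Zr 2 + Zr 2 * (b + Zr 2) * dv (a + Zr 7).
Proof.
move=> ha hb; apply: (@le_by_mul (Zr 4 * (a + Zr 7)) _ _
  (Zr 240 + (Zr 84 * a + (Zr 7 * a * a + (Zr 80 * b + (Zr 40 * a * b + Zr 4 * a * a * b)))))).
+ gt0t. + rewrite /qv /dv. cfield. neq0t. + ge0t.
Qed.

Ltac realt := repeat first [ apply: realB | apply: realD | apply: realM | apply: realX
   | apply: realz | apply: realn | apply: real1 | rewrite realV | assumption ].

Lemma main (rho : C) (hrho : sqrtC 7%:R <= rho)
  (n : int) (hn0 : n != 0) (hn1 : n != 1) (xi zeta : C)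
  (hnz : ~ (xi = 0 /\ zeta = 0)) :
  0 < Qn rho n xi zeta.
Proof.
have h7 : (0:C) < sqrtC 7%:R by rewrite sqrtC_gt0 ltr0n.
have hrho0 : 0 < rho := lt_le_trans h7 hrho.
have hrhor : rho \is Num.real := gtr0_real hrho0.
have hr7 : Zr 7 <= rho * rho.
  rewrite ZrE /= -[7%:R](sqrtCK (7%:R : C)) expr2.
  by apply: ler_pM => //; apply: ltW.
set a := rho * rho - Zr 7.
have ha : 0 <= a by rewrite subr_ge0.
have ea : a + Zr 7 = rho * rho by rewrite /a subrK.
have hr1 : 1 <= rho * rho.
  apply: le_trans hr7; rewrite ZrE ler1n //.
have hK : Cn rho n \is Num.real.
  rewrite /Cn /ecorr /cst /dst; realt.
have key : 0 < Bn rho n /\ 0 < An rho n * Bn rho n - Cn rho n * Cn rho n.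
{ case: n hn0 hn1 {hK} => [m|k] hn0 hn1.
  - case: m hn0 hn1 => [|[|k]] hn0 hn1 //.
    have eu : rho ^ (2 * Posz k.+2) = (rho * rho) ^+ k.+2.
      by rewrite -PoszM -exprnP exprM expr2.
    have eui : rho ^ (- (2 * Posz k.+2)) = ((rho * rho) ^+ k.+2)^-1.
      by rewrite -PoszM -exprnN exprM expr2.
    have eM : ((Posz k.+2)%:~R : C) = k%:R + Zr 2.
      by rewrite (_ : ((Posz k.+2)%:~R : C) = (k.+2)%:R) // ZrE /= -addn2 natrD.
    have hab : `|Posz k.+2| = Posz k.+2 by [].
    have eE : ((Posz k.+2 * `|Posz k.+2| - `|Posz k.+2|)%:~R : C)
        = (k%:R + Zr 2) * (k%:R + Zr 2) - (k%:R + Zr 2).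
      by rewrite hab intrD intrN intrM eM.
    rewrite /An /Bn /Cn /ecorr /cst /dst eu eui eE eM e2 e4 !expr2.
    have hP := indP _ ha k; rewrite ea in hP.
    have hb : 0 <= k%:R :> C by apply: ler0n.
    have hu : 0 < (rho * rho) ^+ k.+2 by apply: exprn_gt0; apply: mulr_gt0.
    have hu1 : 1 <= (rho * rho) ^+ k.+2 by apply: exprn_ege1.
    have hX := X_pos _ _ ha hb; rewrite ea in hX.
    have hs := sv_pos _ ha; rewrite ea in hs.
    move: ((rho * rho) ^+ k.+2) hu hu1 hP => u hu hu1 hP.
    move: (k%:R) hb hP hX => b hb hP hX.
    split.
    + apply: (@gt0_eq _ (u^-1 + (b + Zr 2) * sv (rho * rho))).
      * rewrite /sv. cfield. neq0t.
      * apply: addr_gt0; first by rewrite invr_gt0.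
        apply: mulr_gt0 => //; gt0t.
    + apply: (@gt0_eq _ ((b + Zr 2) * (u * sv (rho * rho) - (sv (rho * rho) + Gv (rho * rho) (b + Zr 2)))
          + (b + Zr 2) * (qv (rho * rho) + Zr 2 + Zr 2 * (b + Zr 2) * dv (rho * rho)) * (1 - u^-1))).
      * rewrite /Gv /sv /qv /dv. cfield. neq0t.
      * apply: gt0_addl.
        -- apply: mulr_gt0; first by gt0t.
           by rewrite subr_gt0.
        -- apply: mulr_ge0; first by apply: mulr_ge0 => //; ge0t.
           by rewrite subr_ge0 invf_le1.
  - have eu : rho ^ (- (2 * Negz k)) = (rho * rho) ^+ k.+1.
      by rewrite NegzE mulrN opprK -PoszM -exprnP exprM expr2.
    have eui : rho ^ (2 * Negz k) = ((rho * rho) ^+ k.+1)^-1.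
      by rewrite NegzE mulrN -PoszM -exprnN exprM expr2.
    have eP1 : ((Posz k.+1)%:~R : C) = k%:R + 1 by rewrite -mulrSr.
    have eM : ((Negz k)%:~R : C) = - (k%:R + 1) by rewrite NegzE intrN eP1.
    have hab : `|Negz k| = Posz k.+1 by [].
    have eE : ((Negz k * `|Negz k| - `|Negz k|)%:~R : C)
        = - (k%:R + 1) * (k%:R + 1) - (k%:R + 1).
      by rewrite ecast hab eM eP1.
    rewrite /An /Bn /Cn /ecorr /cst /dst eu eui eE eM e2 e4 !expr2.
    have hN := indN _ ha k; rewrite ea in hN.
    have hb : 0 <= k%:R :> C by apply: ler0n.
    have hu : 0 < (rho * rho) ^+ k.+1 by apply: exprn_gt0; apply: mulr_gt0.
    have hd := dv_pos _ ha; rewrite ea in hd.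
    have hp := pm2_pos _ ha; rewrite ea in hp.
    move: ((rho * rho) ^+ k.+1) hu hN => u hu hN.
    move: (k%:R) hb hN => b hb hN.
    have hq : 0 <= (b + 1) * (pv (rho * rho) - Zr 2) + Zr 2 * (b + 1) * (b + 1) * dv (rho * rho).
      apply: addr_ge0; apply: mulr_ge0.
      * ge0t.
      * exact: ltW hp.
      * ge0t.
      * exact: ltW hd.
    split.
    + apply: (@gt0_eq _ (u + ((b + 1) * (pv (rho * rho) - Zr 2) + Zr 2 * (b + 1) * (b + 1) * dv (rho * rho)))).
      * rewrite /pv /dv. cfield. neq0t.
      * exact: gt0_addl.
    + apply: (@gt0_eq _ (u^-1 * ((b + 1) * (pv (rho * rho) - Zr 2) + Zr 2 * (b + 1) * (b + 1) * dv (rho * rho))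
          + (b + 1) * (u * (pv (rho * rho) + Zr 2) - Hv (rho * rho) (b + 1)))).
      * rewrite /Hv /pv /dv. cfield. neq0t.
      * apply: gt0_addr.
        -- apply: mulr_ge0 => //; by rewrite invr_ge0 ltW.
        -- apply: mulr_gt0; first by gt0t.
           by rewrite subr_gt0.
}
case: key => hB hD.
rewrite /Qn.
apply: quad.
- exact: hB.
- exact: hD.
- exact: normr_ge0.
- exact: normr_ge0.
- exact: hK.
- exact: Creal_Re.
- by rewrite -(norm_conjC zeta) -normrM; exact: (leif_normC_Re_Creal _).1.
- case: (eqVneq xi 0) => [xi0|hxi]; last by left; rewrite normr_eq0.
  right; rewrite normr_eq0; apply/eqP => zeta0; exact: hnz.
Qed.
End S.

Theorem lemma5p2 (C : numClosedFieldType) (rho : C) (hrho : sqrtC 7%:R <= rho)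
  (n : int) (hn0 : n != 0) (hn1 : n != 1) (xi zeta : C)
  (hnz : ~ (xi = 0 /\ zeta = 0)) :
  0 < Qn rho n xi zeta.
Proof. exact: (@main C rho hrho n hn0 hn1 xi zeta hnz). Qed.
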